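(* Consider the production planning setting described in the context, in the non-overlapping case, with the continuous budgeted scenario set $\mathcal{U}^c$ (budget $\Gamma^c\ge 0$). Fix $\pmb{x}\in\mathbb{X}$ with $X_t=\sum_{i\in[t]}x_i$. Then the optimal value of the adversarial problem $\max_{\pmb{D}\in\mathcal{U}^c}\sum_{t\in[T]}\max\{f_I(X_t,D_t),f_B(X_t,D_t)\}$ equals the optimal value of $$\max\ \sum_{t\in[T]}\max\{f_I(X_t,\widehat{D}_t-\delta_t),\,f_B(X_t,\widehat{D}_t+\delta_t)\}\quad\text{s.t.}\quad\sum_{t\in[T]}\delta_t\le\Gamma^c,\ \ 0\le\delta_t\le\Delta_t\ (t\in[T]).$$
   Context: There are $T\ge 1$ periods, $[T]=\{1,\dots,T\}$. Given are a production cost $c^P$, an inventory cost $c^I$, a backordering cost $c^B$ and a selling price $b^P$ (independent of the period), and a set $\mathbb{X}\subseteq\mathbb{R}^T_+$ of feasible production plans $\pmb{x}=(x_1,\dots,x_T)$ described by finitely many linear constraints. For a plan write $X_t=\sum_{i\in[t]}x_i$. For $t\in[T-1]$ let $f_I(X_t,D_t)=c^I(X_t-D_t)$ and $f_B(X_t,D_t)=c^B(D_t-X_t)$; for $t=T$ let $f_I(X_T,D_T)=c^I(X_T-D_T)+c^PX_T-b^PD_T$ and $f_B(X_T,D_T)=c^B(D_T-X_T)+c^PX_T-b^PX_T$. Nominal cumulative demands $\widehat{D}_t\ge 0$ satisfy $\widehat{D}_t\le\widehat{D}_{t+1}$, and deviations satisfy $0\le\Delta_t\le\widehat{D}_t$.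 The continuous budgeted scenario set is $\mathcal{U}^c=\{\pmb{D}\in\mathbb{R}^T: D_t\le D_{t+1}\ (t\in[T-1]),\ D_t\in[\widehat{D}_t-\Delta_t,\widehat{D}_t+\Delta_t]\ (t\in[T]),\ \sum_{t\in[T]}|D_t-\widehat{D}_t|\le\Gamma^c\}$ with $\Gamma^c\in\mathbb{R}_+$. The non-overlapping case means $\widehat{D}_t+\Delta_t\le\widehat{D}_{t+1}-\Delta_{t+1}$ for all $t\in[T-1]$. *)

(* Defs.v *)
From mathcomp Require Import all_boot all_order all_algebra.
From mathcomp Require Import reals.
Set Implicit Arguments. Unset Strict Implicit. Unset Printing Implicit Defensive.
Import Order.TTheory GRing.Theory Num.Theory.
Local Open Scope ring_scope.

Section Defs.
Variables (R : realType) (T : nat).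
Variables (cP cI cB bP : R).

(* periods are t : 'I_T, i.e. 0..T-1; period t of the paper is t.+1,
   so the last period T of the paper is the index with value T.-1 *)
Definition is_last (t : 'I_T) : bool := (t == T.-1 :> nat).

Definition cumX (x : 'I_T -> R) (t : 'I_T) : R := \sum_(i < T | (i <= t)%N) x i.

Definition fI (t : 'I_T) (X D : R) : R :=
  if is_last t then cI * (X - D) + cP * X - bP * D else cI * (X - D).

Definition fB (t : 'I_T) (X D : R) : R :=
  if is_last t then cB * (D - X) + cP * X - bP * X else cB * (D - X).

Definition Uc (Dhat Delta : 'I_T -> R) (Gamma : R) (D : 'I_T -> R) : Prop :=
  [/\ (forall t1 t2 : 'I_T, t2 = t1.+1 :> nat -> D t1 <= D t2),
      (forall t, Dhat t - Delta t <= D t <= Dhat t + Delta t)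
    & \sum_(t < T) `|D t - Dhat t| <= Gamma].

Definition adv_obj (x D : 'I_T -> R) : R :=
  \sum_(t < T) Num.max (fI t (cumX x t) (D t)) (fB t (cumX x t) (D t)).

Definition delta_feas (Delta : 'I_T -> R) (Gamma : R) (delta : 'I_T -> R) : Prop :=
  \sum_(t < T) delta t <= Gamma /\ (forall t, 0 <= delta t <= Delta t).

Definition ref_obj (x Dhat delta : 'I_T -> R) : R :=
  \sum_(t < T) Num.max (fI t (cumX x t) (Dhat t - delta t))
                       (fB t (cumX x t) (Dhat t + delta t)).
End Defs.

(* Main.v *)
Require Import Defs.
From mathcomp Require Import all_boot all_order all_algebra.
From mathcomp Require Import all_classical all_reals all_analysis.
From mathcomp Require Import ring lra.
Import Order.TTheory GRing.Theory Num.Theory.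
Import numFieldNormedType.Exports.
Local Open Scope classical_set_scope.
Local Open Scope ring_scope.

Definition kI (R : realType) T (cI bP : R) (t : 'I_T) : R :=
  if is_last t then cI + bP else cI.
Arguments kI {R T}.

Lemma fI_lin (R : realType) T (cP cI bP : R) (t : 'I_T) X D :
  fI cP cI bP t X D = fI cP cI bP t X 0 - kI cI bP t * D.
Proof. by rewrite /fI /kI; case: ifP => _; ring. Qed.

Lemma fB_lin (R : realType) T (cP cB bP : R) (t : 'I_T) X D :
  fB cP cB bP t X D = fB cP cB bP t X 0 + cB * D.
Proof. by rewrite /fB; case: ifP => _; ring. Qed.

Lemma kI_ge0 (R : realType) T (cI bP : R) (t : 'I_T) :
  0 <= cI -> 0 <= bP -> 0 <= kI cI bP t.
Proof. by move=> h1 h2; rewrite /kI; case: ifP => _ //; rewrite addr_ge0. Qed.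
Lemma aff_cont (R : realType) n (t : 'I_n) (a b : R) :
  continuous (fun v : 'rV[R]_n => a + b * v ord0 t).
Proof.
move=> v.
have FF : Filter (nbhs v) by exact: nbhs_filter.
have h1 := @coord_continuous R 1 n ord0 t v.
have h2 := @cvgMr _ _ _ FF _ b _ h1.
have h3 := @cvgD _ _ _ _ FF _ _ _ _ (cvg_cst a) h2.
exact: h3.
Qed.

Lemma sum_cont (R : realType) n (I : Type) (r : seq I) (P : pred I)
   (g : I -> 'rV[R]_n -> R) :
  (forall i, continuous (g i)) ->
  continuous (fun v => \sum_(i <- r | P i) g i v).
Proof.
move=> gc; elim: r => [|i r IH] v.
  have -> : (fun v : 'rV[R]_n => \sum_(i <- [::] | P i) g i v) = fun=> 0.
    by apply: funext => w; rewrite big_nil.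
  exact: cst_continuous.
have FF : Filter (nbhs v) by exact: nbhs_filter.
case Pi: (P i).
  have -> : (fun v => \sum_(j <- i :: r | P j) g j v) =
            fun v => g i v + \sum_(j <- r | P j) g j v.
    by apply: funext => w; rewrite big_cons Pi.
  have h := @cvgD _ _ _ _ FF _ _ _ _ (gc i v) (IH v).
  exact: h.
have -> : (fun v => \sum_(j <- i :: r | P j) g j v) =
          fun v => \sum_(j <- r | P j) g j v.
  by apply: funext => w; rewrite big_cons Pi.
exact: IH.
Qed.

Lemma max_cont (R : realType) n (f g : 'rV[R]_n -> R) :
  continuous f -> continuous g -> continuous (fun v => Num.max (f v) (g v)).
Proof.
move=> fc gc v; exact: (@continuous_max _ _ f g v (fc v) (gc v)).
Qed.

Lemma ref_attain (R : realType) T (cP cI cB bP Gamma : R) (Dhat Delta x : 'I_T -> R) :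
  0 <= Gamma -> (forall t, 0 <= Delta t) ->
  exists2 d, delta_feas Delta Gamma d &
    forall d', delta_feas Delta Gamma d' ->
      ref_obj cP cI cB bP x Dhat d' <= ref_obj cP cI cB bP x Dhat d.
Proof.
move=> G0 D0.
pose A := [set v : 'rV[R]_T | delta_feas Delta Gamma (fun t => v ord0 t)].
pose f := fun v : 'rV[R]_T => ref_obj cP cI cB bP x Dhat (fun t => v ord0 t).
have A0 : A !=set0.
  exists 0; rewrite /A /delta_feas /=; split.
    by rewrite big1 // => t _; rewrite mxE.
  by move=> t; rewrite mxE lexx D0.
have cA : compact A.
  apply: (@subclosed_compact _ A [set v : 'rV[R]_T | forall i, `[0, Delta i]%classic (v ord0 i)]).
  - have -> : A = (fun v : 'rV[R]_T => \sum_(t < T) v ord0 t) @^-1` [set y | y <= Gamma] `&` \bigcap_(t in setT) ((fun v : 'rV[R]_T => v ord0 t) @^-1` ([set y | 0 <= y] `&` [set y | y <= Delta t])).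
      apply/seteqP; split => v /=.
        case=> h1 h2; split => // t _ /=; exact/andP/h2.
      case=> h1 h2; split => // t; exact/andP/h2.
    apply: closedI.
      apply: preimage_closed; last exact: closed_le.
      move=> v _; exact: (@sum_cont R T _ (index_enum _) xpredT (fun t v => v ord0 t) (fun t => @coord_continuous R 1 T ord0 t) v).
    apply: closed_bigI => t _; apply: preimage_closed; last by apply: closedI; [exact: closed_ge | exact: closed_le].
    move=> v _; exact: coord_continuous.
  - apply: (@rV_compact _ T (fun i => `[0, Delta i]%classic)) => i; exact: segment_compact.
  - move=> v [_ h] i /=; rewrite in_itv /=; exact: h.
have cf : {within A, continuous f}.
  apply: continuous_subspaceT => v.
  rewrite /f /ref_obj.
  apply: (@sum_cont R T _ (index_enum _) xpredT (fun t v => Num.max (fI cP cI bP t (cumX x t) (Dhat t - v ord0 t)) (fB cP cB bP t (cumX x t) (Dhat t + v ord0 t)))) => t.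
  apply: max_cont.
    have -> : (fun v : 'rV[R]_T => fI cP cI bP t (cumX x t) (Dhat t - v ord0 t)) = fun v => (fI cP cI bP t (cumX x t) 0 - kI cI bP t * Dhat t) + kI cI bP t * v ord0 t.
      by apply: funext => w; rewrite fI_lin; ring.
    exact: aff_cont.
  have -> : (fun v : 'rV[R]_T => fB cP cB bP t (cumX x t) (Dhat t + v ord0 t)) = fun v => (fB cP cB bP t (cumX x t) 0 + cB * Dhat t) + cB * v ord0 t.
    by apply: funext => w; rewrite fB_lin; ring.
  exact: aff_cont.
have [c cA' cmax] := compact_EVT_max A0 cA cf.
exists (fun t => c ord0 t); first by rewrite inE in cA'.
move=> d' hd'.
have E : (fun t => (\row_t0 d' t0) ord0 t) = d' by apply: funext => t; rewrite mxE.
have := cmax (\row_t d' t); rewrite /f E; apply.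
by rewrite inE /A /= E.
Qed.

Lemma h_le_r (R : realType) T (cP cI cB bP : R) (t : 'I_T) X Dh d D :
  0 <= cI -> 0 <= cB -> 0 <= bP ->
  Dh - d <= D -> D <= Dh + d ->
  Num.max (fI cP cI bP t X D) (fB cP cB bP t X D) <=
  Num.max (fI cP cI bP t X (Dh - d)) (fB cP cB bP t X (Dh + d)).
Proof.
move=> cI0 cB0 bP0 h1 h2.
have k0 := @kI_ge0 R T cI bP t cI0 bP0.
rewrite ge_max; apply/andP; split; rewrite le_max; apply/orP; [left|right].
  rewrite [X in X <= _]fI_lin [X in _ <= X]fI_lin; nra.
rewrite [X in X <= _]fB_lin [X in _ <= X]fB_lin; nra.
Qed.

Theorem lemma4 (R : realType) (T : nat) (cP cI cB bP Gamma : R)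
  (m : nat) (A : 'I_m -> 'I_T -> R) (b : 'I_m -> R)
  (Dhat Delta x : 'I_T -> R) :
  (1 <= T)%N ->
  0 <= cP -> 0 <= cI -> 0 <= cB -> 0 <= bP ->
  0 <= Gamma ->
  (forall t, 0 <= Dhat t) ->
  (forall t1 t2 : 'I_T, t2 = t1.+1 :> nat -> Dhat t1 <= Dhat t2) ->
  (forall t, 0 <= Delta t <= Dhat t) ->
  (forall t1 t2 : 'I_T, t2 = t1.+1 :> nat ->
     Dhat t1 + Delta t1 <= Dhat t2 - Delta t2) ->
  (* x is in the polyhedron X = {x in R^T_+ | A x <= b} *)
  (forall t, 0 <= x t) ->
  (forall i, \sum_(t < T) A i t * x t <= b i) ->
  exists v : R,
    [/\ (exists D, Uc Dhat Delta Gamma D /\ adv_obj cP cI cB bP x D = v),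
        (forall D, Uc Dhat Delta Gamma D -> adv_obj cP cI cB bP x D <= v),
        (exists delta, delta_feas Delta Gamma delta /\
                       ref_obj cP cI cB bP x Dhat delta = v)
      & (forall delta, delta_feas Delta Gamma delta ->
                       ref_obj cP cI cB bP x Dhat delta <= v)].
Proof.
move=> hT cP0 cI0 cB0 bP0 G0 Dh0 Dhmono DeltaB nonover x0 Ax.
have D0 : forall t, 0 <= Delta t by move=> t; case/andP: (DeltaB t).
have [d dfeas dmax] := @ref_attain R T cP cI cB bP Gamma Dhat Delta x G0 D0.
have [dsum dB] := dfeas.
exists (ref_obj cP cI cB bP x Dhat d).
have part2 : forall D, Uc Dhat Delta Gamma D ->
    adv_obj cP cI cB bP x D <= ref_obj cP cI cB bP x Dhat d.
  move=> D [mono bnd sumb].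
  apply: le_trans (dmax (fun t => `|D t - Dhat t|) _).
    rewrite /adv_obj /ref_obj; apply: ler_sum => t _; apply: h_le_r => //.
      by case: (lerP 0 (D t - Dhat t)) => h;
        [rewrite ger0_norm // | rewrite ltr0_norm //]; lra.
    by case: (lerP 0 (D t - Dhat t)) => h;
      [rewrite ger0_norm // | rewrite ltr0_norm //]; lra.
  split => // t; have /andP[b1 b2] := bnd t.
  by case: (lerP 0 (D t - Dhat t)) => h;
    [rewrite ger0_norm // | rewrite ltr0_norm //]; apply/andP; split; lra.
pose Dst t := if fB cP cB bP t (cumX x t) (Dhat t + d t) <=
                 fI cP cI bP t (cumX x t) (Dhat t - d t)
              then Dhat t - d t else Dhat t + d t.
have U : Uc Dhat Delta Gamma Dst.
  split.
  - move=> t1 t2 e; have := nonover t1 t2 e.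
    have /andP[a1 a2] := dB t1; have /andP[a3 a4] := dB t2.
    by rewrite /Dst; case: ifP => _; case: ifP => _ h; lra.
  - move=> t; have /andP[a1 a2] := dB t.
    by rewrite /Dst; case: ifP => _; apply/andP; split; lra.
  - apply: le_trans dsum; apply: ler_sum => t _.
    have /andP[a1 a2] := dB t.
    by rewrite /Dst; case: ifP => _; rewrite ler_norml; apply/andP; split; lra.
split => //.
- exists Dst; split => //; apply/eqP; rewrite eq_le part2 //=.
  rewrite /adv_obj /ref_obj; apply: ler_sum => t _; rewrite /Dst.
  case: ifP => h.
    rewrite ge_max; apply/andP; split; rewrite le_max; apply/orP; left => //.
  have h' : fI cP cI bP t (cumX x t) (Dhat t - d t) <=
            fB cP cB bP t (cumX x t) (Dhat t + d t).
    by apply/ltW; rewrite ltNge h.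
  rewrite ge_max; apply/andP; split; rewrite le_max; apply/orP; right => //.
- by exists d.
Qed.
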